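(* For every $k\ge 0$, a permutation $\pi$ is sorted by the left-greedy procedure on the $\mathfrak{D}^k\mathfrak{I}$ machine if and only if $\pi$ avoids the pattern $231$. In particular, $Sort^{(lg)}_k$ is a permutation class with basis $\{231\}$.
   Context: The $\mathfrak{D}^k\mathfrak{I}$ machine consists of $k$ stacks $D_1,\dots,D_k$ (decreasing stacks) followed in series by a stack $I$ (increasing stack). The input permutation is read from left to right. The elements of each $D_i$ must be in decreasing order from top to bottom (top is largest), and those of $I$ in increasing order from top to bottom (top is smallest). Operations: $d_0$ pushes the next input element into $D_1$ (into $I$ if $k=0$); $d_i$ ($1\le i\le k-1$) moves the top of $D_i$ to $D_{i+1}$; $d_k$ moves the top of $D_k$ to $I$; $d_{k+1}$ pops the top of $I$ and appends it to the output. An operation is legal if it respects the stack restrictions; $d_{k+1}$ is legal if the popped element is the smallest among the elements not yet output, and also if no other operation is legal. The left-greedy procedure performs, at each step, the legal operation $d_j$ with the largest index $j$ (priority $d_{k+1}\rhd d_k\rhd\cdots\rhd d_1\rhd d_0$). $Sort^{(lg)}_k$ is the set of permutations whose output under this procedure is the identity. *)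

(* Defs.v *)
From mathcomp Require Import all_boot.
Set Implicit Arguments. Unset Strict Implicit. Unset Printing Implicit Defensive.

(* State of the D^k I machine.
   - inp : remaining input (read left to right, head = next element)
   - ds  : the k decreasing stacks D_1..D_k (ds`_(i-1) = D_i), head = top
   - istk: the increasing stack I, head = top
   - out : output produced so far, in order. *)
Record mstate := MState { inp : seq nat; ds : seq (seq nat);
                          istk : seq nat; out : seq nat }.

Definition okD (D : seq nat) (x : nat) : bool :=
  if D is y :: _ then y < x else true.
Definition okI (I : seq nat) (x : nat) : bool :=
  if I is y :: _ then x < y else true.

Definition src (j : nat) (st : mstate) : seq nat :=
  if j == 0 then inp st else nth [::] (ds st) j.-1.

(* legality of d_j for 0 <= j <= k (moves, not the pop d_(k+1)) *)
Definition legal_move (k j : nat) (st : mstate) : bool :=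
  if src j st is x :: _ then
    (if j < k then okD (nth [::] (ds st) j) x else okI (istk st) x)
  else false.

Definition remaining (st : mstate) : seq nat :=
  inp st ++ flatten (ds st) ++ istk st.

Definition legal_pop (k : nat) (st : mstate) : bool :=
  if istk st is x :: _ then
    all (fun y => x <= y) (remaining st)
    || ~~ has (fun j => legal_move k j st) (iota 0 k.+1)
  else false.

Definition do_move (k j : nat) (st : mstate) : mstate :=
  match src j st with
  | [::] => st
  | x :: rest =>
    let inp' := if j == 0 then rest else inp st in
    let ds1 := if j == 0 then ds st else set_nth [::] (ds st) j.-1 rest in
    if j < k then MState inp' (set_nth [::] ds1 j (x :: nth [::] ds1 j))
                         (istk st) (out st)
    else MState inp' ds1 (x :: istk st) (out st)
  end.

Definition do_pop (st : mstate) : mstate :=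
  match istk st with
  | [::] => st
  | x :: rest => MState (inp st) (ds st) rest (rcons (out st) x)
  end.

(* one step of the left-greedy procedure: the legal operation with the
   largest index (d_(k+1) > d_k > ... > d_0); no-op if none is legal *)
Definition lg_step (k : nat) (st : mstate) : mstate :=
  if legal_pop k st then do_pop st
  else match [seq j <- rev (iota 0 k.+1) | legal_move k j st] with
       | j :: _ => do_move k j st
       | [::] => st
       end.

(* Every operation moves one element one position forward, and each element
   travels input -> D_1 -> ... -> D_k -> I -> output, i.e. k+2 moves, so the
   procedure performs exactly size s * (k+2) operations. *)
Definition lg_run (k : nat) (s : seq nat) : mstate :=
  iter (size s * k.+2) (lg_step k) (MState s (nseq k [::]) [::] [::]).

Definition lg_sortable (k : nat) (s : seq nat) : Prop :=
  out (lg_run k s) = iota 1 (size s).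

Definition contains_pattern (p s : seq nat) : Prop :=
  exists t : seq nat, [/\ subseq t s, size t = size p &
    forall i j, i < size p -> j < size p ->
      (nth 0 t i < nth 0 t j) = (nth 0 p i < nth 0 p j)].

Definition avoids (p s : seq nat) : Prop := ~ contains_pattern p s.

(* Main.v *)
Require Import Defs.
From mathcomp Require Import all_boot zify.

Lemma flatten_nseq_nil k : flatten (nseq k ([::] : seq nat)) = [::].
Proof. by elim: k. Qed.

Lemma nth_nseq_nil k i : nth [::] (nseq k ([::] : seq nat)) i = [::].
Proof. by rewrite nth_nseq; case: ifP. Qed.

Lemma set_nth_nseq_nil k j : j < k -> set_nth [::] (nseq k ([::] : seq nat)) j [::] = nseq k [::].
Proof.
elim: k j => [|k IH] [|j] //= H. by rewrite IH.
Qed.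

Lemma flatten_set1 k j (x : nat) : j < k -> flatten (set_nth [::] (nseq k ([::] : seq nat)) j [:: x]) = [:: x].
Proof.
elim: k j => [|k IH] [|j] //= H. by rewrite flatten_nseq_nil. by rewrite IH.
Qed.

Lemma filter_head (P : pred nat) k i : i <= k -> P i -> (forall j, i < j <= k -> ~~ P j) ->
  exists r, [seq j <- rev (iota 0 k.+1) | P j] = i :: r.
Proof.
elim: k => [|k IH] Hi Pi Hj.
  rewrite leqn0 in Hi; move/eqP: Hi => Hi; subst i. by rewrite /= Pi; eexists.
have -> : iota 0 k.+2 = iota 0 k.+1 ++ [:: k.+1] by rewrite -addn1 iotaD.
rewrite rev_cat /=.
case: (ltngtP i k.+1) Hi => // Hik _.
- have -> : P k.+1 = false. by apply/negbTE/Hj; rewrite Hik leqnn.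
  apply: IH => // j Hj'; apply: Hj; lia.
- subst i; rewrite Pi; eexists; reflexivity.
Qed.


Definition C k inp I o := MState inp (nseq k ([::] : seq nat)) I o.
Definition inter k (x : nat) rest I o i :=
  if i == 0 then MState (x::rest) (nseq k [::]) I o
  else MState rest (set_nth [::] (nseq k ([::] : seq nat)) i.-1 [::x]) I o.
Definition popmin (I inp : seq nat) :=
  if I is y :: _ then all (fun v => y <= v) (inp ++ I) else false.

Lemma ss (T : Type) (x0 : T) s n y1 y2 : set_nth x0 (set_nth x0 s n y1) n y2 = set_nth x0 s n y2.
Proof. by rewrite set_set_nth eqxx. Qed.

Lemma legal_pop_inter k x rest I o i : i <= k -> legal_move k i (inter k x rest I o i) ->
  legal_pop k (inter k x rest I o i) = popmin I (x :: rest).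
Proof.
move=> Hik Hl; rewrite /legal_pop /popmin.
have -> : has (fun j => legal_move k j (inter k x rest I o i)) (iota 0 k.+1).
  apply/hasP; exists i => //; rewrite mem_iota; lia.
have -> : istk (inter k x rest I o i) = I by rewrite /inter; case: eqP.
clear Hl; case: I => [|y I] //; rewrite orbF.
rewrite /remaining /inter; case: eqP => Hi /=.
  by rewrite flatten_nseq_nil.
rewrite flatten_set1; last lia.
rewrite !all_cat /=.
by case: (all _ rest); case: (y <= x); case: (all _ I).
Qed.

Lemma legal_inter_gt k x rest I o i j : i < j -> legal_move k j (inter k x rest I o i) = false.
Proof.
move=> Hij; rewrite /legal_move /src /inter.
have -> : (j == 0) = false by lia.
case: eqP => Hi /=; first by rewrite nth_nseq_nil.
rewrite nth_set_nth /=.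
have -> : (j.-1 == i.-1) = false by lia.
by rewrite nth_nseq_nil.
Qed.

Lemma legal_inter k x rest I o i : i < k -> legal_move k i (inter k x rest I o i).
Proof.
move=> Hik; rewrite /legal_move /src /inter.
case: eqP => Hi /=.
  by subst i; rewrite Hik nth_nseq_nil.
rewrite nth_set_nth /= eqxx Hik nth_set_nth /=.
have -> : (i == i.-1) = false by lia.
by rewrite nth_nseq_nil.
Qed.

Lemma legal_inter_k k x rest I o : legal_move k k (inter k x rest I o k) = okI I x.
Proof.
rewrite /legal_move /src /inter.
case: eqP => Hi /=. by subst k.
by rewrite nth_set_nth /= eqxx ltnn.
Qed.

Lemma step_inter k x rest I o i : i < k -> ~~ popmin I (x :: rest) ->
  lg_step k (inter k x rest I o i) = inter k x rest I o i.+1.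
Proof.
move=> Hik Hp.
have Hl := legal_inter k x rest I o i Hik.
rewrite /lg_step legal_pop_inter //; last lia.
rewrite (negbTE Hp).
have [r ->] := @filter_head (fun j => legal_move k j (inter k x rest I o i)) k i (ltnW Hik) Hl
  (fun j Hj => negbT (legal_inter_gt k x rest I o _ _ (proj1 (andP Hj)))).
rewrite /do_move /inter /src.
case: eqP => Hi /=.
  subst i; rewrite Hik nth_nseq_nil /=. by [].
rewrite nth_set_nth /= eqxx /=.

rewrite Hik ss set_nth_nseq_nil; last lia.
rewrite nth_nseq_nil. by [].
Qed.

Lemma step_inter_k k x rest I o : okI I x -> ~~ popmin I (x :: rest) ->
  lg_step k (inter k x rest I o k) = C k rest (x :: I) o.
Proof.
move=> HI Hp.
have Hl : legal_move k k (inter k x rest I o k) by rewrite legal_inter_k.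
rewrite /lg_step legal_pop_inter //.
rewrite (negbTE Hp).
have [r ->] := @filter_head (fun j => legal_move k j (inter k x rest I o k)) k k (leqnn k) Hl
  (fun j Hj => negbT (legal_inter_gt k x rest I o _ _ (proj1 (andP Hj)))).
rewrite /do_move /inter /src /C.
case: eqP => Hi /=.
  by subst k.
rewrite nth_set_nth /= eqxx ltnn ss set_nth_nseq_nil //; lia.
Qed.

Lemma iter_inter k x rest I o i : i <= k -> ~~ popmin I (x :: rest) ->
  iter i (lg_step k) (C k (x :: rest) I o) = inter k x rest I o i.
Proof.
move=> Hik Hp; elim: i Hik => [|i IH] Hik //=.
rewrite IH; last lia. by apply: step_inter.
Qed.

Lemma iter_entry k x rest I o : okI I x -> ~~ popmin I (x :: rest) ->
  iter k.+1 (lg_step k) (C k (x :: rest) I o) = C k rest (x :: I) o.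
Proof.
move=> HI Hp. by rewrite /= iter_inter // step_inter_k.
Qed.

Lemma step_pop k inp y I o : popmin (y :: I) inp ->
  lg_step k (C k inp (y :: I) o) = C k inp I (rcons o y).
Proof.
move=> Hp; rewrite /lg_step /legal_pop /remaining /C /= flatten_nseq_nil /=.
by rewrite /popmin in Hp; rewrite Hp.
Qed.


Lemma step_cases k st : lg_step k st = do_pop st \/
  (exists j, [/\ j <= k, legal_move k j st & lg_step k st = do_move k j st]) \/
  lg_step k st = st.
Proof.
rewrite /lg_step; case: legal_pop; [by left|right].
case E: [seq j <- rev (iota 0 k.+1) | legal_move k j st] => [|j r]; [by right|left].
have : j \in [seq j <- rev (iota 0 k.+1) | legal_move k j st] by rewrite E mem_head.
rewrite mem_filter mem_rev mem_iota => /andP [Hl Hj].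
exists j; split => //; lia.
Qed.

Lemma out_ext k st : exists e, out (lg_step k st) = out st ++ e.
Proof.
have [->|[[j [_ _ ->]]|->]] := step_cases k st.
- rewrite /do_pop; case: (istk st) => [|h t]; first by exists [::]; rewrite cats0.
  by exists [:: h]; rewrite cats1.
- rewrite /do_move; case: (src j st) => [|v r]; first by exists [::]; rewrite cats0.
  by case: ifP => _; exists [::]; rewrite cats0.
- by exists [::]; rewrite cats0.
Qed.

Lemma move_lt k j st v r : j < k -> src j st = v :: r ->
  [/\ istk (do_move k j st) = istk st, out (do_move k j st) = out st &
      src k (do_move k j st) = if j == k.-1 then v :: src k st else src k st].
Proof.
move=> Hjk Hs; rewrite /do_move Hs Hjk /=.
split => //.
rewrite /src /=.
have -> : (k == 0) = false by lia.
rewrite nth_set_nth /=.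
case: eqP => Hj.
- rewrite Hj eqxx; congr cons.
  case: eqP => Hj0 //. rewrite nth_set_nth /=.
  have -> : (j == j.-1) = false by lia. by [].
- have -> : (j == k.-1) = false by lia.
  case: eqP => Hj0 //. rewrite nth_set_nth /=.
  have -> : (k.-1 == j.-1) = false by lia. by [].
Qed.

Definition R k y z x st := [/\ y \in istk st, sorted ltn (istk st), z \notin istk st,
  z \notin out st & exists h t, src k st = h :: t /\ x <= h].
Definition Q k y z x st := (exists o1 o2, out st = o1 ++ o2 /\ y \in o1 /\ z \notin o1)
  \/ R k y z x st.

Lemma top_le (a y : nat) b : sorted ltn (a :: b) -> y \in a :: b -> a <= y.
Proof.
move=> Hs; rewrite in_cons => /orP [/eqP -> //|Hy].
have := order_path_min ltn_trans Hs => /allP /(_ y Hy). lia.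
Qed.

Lemma Q_step k y z x st : z < y -> y <= x -> Q k y z x st -> Q k y z x (lg_step k st).
Proof.
move=> Hzy Hyx [[o1 [o2 [Ho [Hy Hz]]]]|[Hy Hs Hzi Hzo [h [t [Hsrc Hxh]]]]].
  left; have [e He] := out_ext k st; exists o1, (o2 ++ e); by rewrite He Ho catA.
have [->|[[j [Hjk Hl ->]]|->]] := step_cases k st.
- rewrite /do_pop.
  case E: (istk st) Hy Hs Hzi => [//|a b] Hy Hs Hzi.
  case: (eqVneq a y) => Hay.
    left; exists (rcons (out st) a), [::]; rewrite cats0; split => //.
    split; first by rewrite Hay mem_rcons mem_head.
    rewrite mem_rcons in_cons negb_or Hzo andbT. apply/eqP; lia.
  right; split => //=.
  + move: Hy; rewrite in_cons => /orP [/eqP H|//]. by rewrite H eqxx in Hay.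
  + exact: path_sorted Hs.
  + by move: Hzi; rewrite in_cons negb_or => /andP [].
  + rewrite mem_rcons in_cons negb_or Hzo andbT.
    by move: Hzi; rewrite in_cons negb_or => /andP [].
  + by exists h, t.
- case: (ltngtP j k) Hjk => // Hjk _.
  + move: Hl; rewrite /legal_move Hjk.
    case Es: (src j st) => [//|v r] Hl.
    have [Hi Ho Hk] := move_lt k j st v r Hjk Es.
    right; rewrite /R Hi Ho Hk; split => //.
    case: eqP => Hj; last by exists h, t.
    exists v, (src k st); split => //.
    move: Hl; rewrite Hj.
    have -> : nth [::] (ds st) k.-1 = src k st.
      rewrite /src. have -> : (k == 0) = false by lia. by [].
    rewrite Hsrc /=. lia.
  + subst j. move: Hl; rewrite /legal_move Hsrc ltnn.
    case E: (istk st) Hy Hs => [//|a b] Hy Hs /=.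
    have := top_le a y b Hs Hy. move=> H1 H2; exfalso; lia.
- by right; split => //; exists h, t.
Qed.

Lemma Q_iter k y z x st N : z < y -> y <= x -> Q k y z x st -> Q k y z x (iter N (lg_step k) st).
Proof.
move=> H1 H2 HQ; elim: N => //= N IH. exact: Q_step.
Qed.

Lemma Q_final k y z x st n : Q k y z x st -> out st = iota 1 n -> 0 < z <= n -> z < y -> False.
Proof.
move=> [[o1 [o2 [Ho [Hy Hz]]]]|[_ _ _ Hzo _]] Hout Hzn Hzy; last first.
  by move: Hzo; rewrite Hout mem_iota; lia.
have Hsz : size o1 <= n.
  have := f_equal size Ho; rewrite Hout size_iota size_cat. lia.
have Ho1 : o1 = iota 1 (size o1).
  have : iota 1 n = iota 1 (size o1) ++ iota (1 + size o1) (n - size o1).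
    by rewrite -iotaD subnKC.
  rewrite -Hout Ho => /eqP. rewrite eqseq_cat; last by rewrite size_iota.
  by case/andP => /eqP.
move: Hy Hz; rewrite Ho1 !mem_iota. lia.
Qed.


Lemma contains_triple s : contains_pattern [:: 2; 3; 1] s ->
  exists a b c, subseq [:: a; b; c] s /\ c < a < b.
Proof.
move=> [[|a [|b [|c [|d t]]]] [Hs Hsz H]] //.
exists a, b, c; split => //.
have h1 := H 0 1 isT isT. have h2 := H 2 0 isT isT. simpl in h1, h2. lia.
Qed.

Lemma triple_contains s a b c : subseq [:: a; b; c] s -> c < a < b ->
  contains_pattern [:: 2; 3; 1] s.
Proof.
move=> Hs Hc; exists [:: a; b; c]; split => //.
move=> [|[|[|i]]] [|[|[|j]]] //= _ _; lia.
Qed.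

Definition Inv (s inp I o : seq nat) :=
  [/\ exists p, s = p ++ inp /\ {subset I <= p}, sorted ltn I,
      o = iota 1 (size o) & perm_eq (o ++ I ++ inp) s].

Lemma disj (o I inp : seq nat) a b : uniq (o ++ I ++ inp) -> a \in I -> b \in inp -> a != b.
Proof.
rewrite !cat_uniq => /and3P [_ _ /and3P [_ H _]] Ha Hb.
apply/eqP => Hab; subst b.
by move/hasP: H; apply; exists a.
Qed.

Lemma disj2 (o I inp : seq nat) a b : uniq (o ++ I ++ inp) -> a \in o -> b \in I ++ inp -> a != b.
Proof.
rewrite !cat_uniq => /and3P [_ H _] Ha Hb.
apply/eqP => Hab; subst b.
by move/hasP: H; apply; exists a.
Qed.

Lemma pop_val s inp y I o : perm_eq s (iota 1 (size s)) -> Inv s inp (y :: I) o ->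
  popmin (y :: I) inp -> y = (size o).+1.
Proof.
move=> Hp [_ _ Ho Hperm] Hm.
have H1 := perm_trans Hperm Hp.
have Hsz := perm_size H1. rewrite size_iota !size_cat /= in Hsz.
have Hle : size o <= size s by rewrite -Hsz; apply: leq_addr.
move: H1; rewrite {1}Ho -(subnKC Hle) iotaD perm_cat2l => H2.
have Hy : y \in iota (1 + size o) (size s - size o).
  by rewrite -(perm_mem H2) mem_cat mem_head.
have Hm' : (1 + size o) \in (y :: I) ++ inp.
  rewrite (perm_mem H2) mem_iota. apply/andP; split => //.
  rewrite -Hsz. lia.
move: Hm; rewrite /popmin => /allP H.
have := H (1 + size o); rewrite mem_cat orbC -mem_cat => /(_ Hm').
move: Hy; rewrite mem_iota. lia.
Qed.

Lemma pop_inv s inp y I o : perm_eq s (iota 1 (size s)) -> Inv s inp (y :: I) o ->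
  popmin (y :: I) inp -> Inv s inp I (rcons o y).
Proof.
move=> Hp Hinv Hm.
have Hy := pop_val s inp y I o Hp Hinv Hm.
case: Hinv => [[p [Hs Hsub]] Hsort Ho Hperm]; split.
- exists p; split => // v Hv; apply: Hsub; by rewrite in_cons Hv orbT.
- exact: path_sorted Hsort.
- by rewrite size_rcons -(addn1 (size o)) iotaD -Ho cats1 Hy add1n.
- by rewrite cat_rcons.
Qed.

Lemma entry_inv s x rest I o : Inv s (x :: rest) I o -> okI I x -> Inv s rest (x :: I) o.
Proof.
case=> [[p [Hs Hsub]] Hsort Ho Hperm] Hok; split => //.
- exists (rcons p x); split; first by rewrite cat_rcons.
  move=> v; rewrite in_cons mem_rcons in_cons => /orP [->//|Hv].
  by rewrite Hsub ?orbT.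
- by case: I Hsort Hok {Hsub Hperm} => [|y I] //= -> ->.
- apply: perm_trans Hperm; rewrite perm_cat2l.
  by rewrite -cat1s (perm_catCA [:: x] I rest).
Qed.

Lemma small_z s x rest y I o : Inv s (x :: rest) (y :: I) o ->
  ~~ popmin (y :: I) (x :: rest) -> exists z, z < y /\ z \in x :: rest.
Proof.
case=> [_ Hsort _ _]; rewrite /popmin => /allPn [z Hz Hyz].
exists z; split; first lia.
move: Hz; rewrite mem_cat => /orP [//|Hz].
have := top_le y z I Hsort Hz. lia.
Qed.

Lemma src_inter_k k x rest I o : exists t, src k (inter k x rest I o k) = x :: t.
Proof.
rewrite /src /inter; case: eqP => Hk /=.
  by subst k; exists rest.
by rewrite nth_set_nth /= eqxx; exists [::].
Qed.

Lemma inv_uniq s inp I o : perm_eq s (iota 1 (size s)) -> Inv s inp I o -> uniq (o ++ I ++ inp).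
Proof.
move=> Hp [_ _ _ Hperm]; rewrite (perm_uniq Hperm) (perm_uniq Hp); exact: iota_uniq.
Qed.

Lemma dirA k s : perm_eq s (iota 1 (size s)) -> avoids [:: 2; 3; 1] s ->
  forall M N inp I o, N < M -> N = k.+2 * size inp + size I -> Inv s inp I o ->
  out (iter N (lg_step k) (C k inp I o)) = iota 1 (size s).
Proof.
move=> Hp Hav M; elim: M => [|M IH] N inp I o HNM HN Hinv; first by [].
have Hu := inv_uniq s inp I o Hp Hinv.
case Hpm: (popmin I inp).
  case: I Hpm HN Hinv Hu => [//|y I] Hpm HN Hinv Hu.
  rewrite HN /= addnS iterSr step_pop //.
  apply: IH; [|reflexivity|exact: pop_inv].
  rewrite HN /= addnS in HNM; lia.
case: inp Hpm HN Hinv Hu => [|x rest] Hpm HN Hinv Hu.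
  case: I Hpm HN Hinv Hu => [|y I] Hpm HN Hinv Hu.
    rewrite muln0 /= in HN; rewrite HN /=.
    case: Hinv => [_ _ Ho Hperm]. rewrite Ho; congr iota.
    by rewrite -(perm_size Hperm) !cats0.
  exfalso; move: Hpm; rewrite /popmin /= leqnn /=.
  case: Hinv => [_ Hsort _ _]. suff -> : all (leq y) I by []. apply: sub_all (order_path_min ltn_trans Hsort) => v; exact: ltnW.
have Hok : okI I x.
  case: I Hpm HN Hinv Hu => [//|y I] Hpm HN Hinv Hu /=.
  rewrite ltnNge; apply/negP => Hyx.
  have [z [Hzy Hz]] := small_z s x rest y I o Hinv (negbT Hpm).
  have Hzr : z \in rest by move: Hz; rewrite in_cons => /orP [/eqP Hzx|//]; lia.
  case: Hinv => [[p [Hs Hsub]] _ _ _].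
  have Hxy := disj o (y :: I) (x :: rest) y x Hu (mem_head _ _) (mem_head _ _).
  apply: Hav; apply: (triple_contains s y x z); last by move/eqP: Hxy; lia.
  rewrite Hs -cat1s; apply: cat_subseq; first by rewrite sub1seq Hsub // mem_head.
  by rewrite /= eqxx sub1seq.
have HN' : N = (k.+2 * size rest + (size I).+1) + k.+1 by rewrite HN /=; lia.
rewrite HN' iterD iter_entry //; last by rewrite Hpm.
apply: IH; [lia|by rewrite /= addnS|exact: entry_inv].
Qed.

Definition Trip (I inp : seq nat) := exists a b c, c < a < b /\
  ((a \in I /\ subseq [:: b; c] inp) \/ subseq [:: a; b; c] inp).

Lemma dirB k s : perm_eq s (iota 1 (size s)) ->
  forall M N inp I o, N < M -> N = k.+2 * size inp + size I -> Inv s inp I o -> Trip I inp ->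
  out (iter N (lg_step k) (C k inp I o)) <> iota 1 (size s).
Proof.
move=> Hp M; elim: M => [|M IH] N inp I o HNM HN Hinv HT; first by [].
have Hu := inv_uniq s inp I o Hp Hinv.
case Hpm: (popmin I inp).
  case: I Hpm HN Hinv Hu HT => [//|y I] Hpm HN Hinv Hu HT.
  rewrite HN /= addnS iterSr step_pop //.
  apply: IH; [|reflexivity|exact: pop_inv|].
    rewrite HN /= addnS in HNM; lia.
  case: HT => [a [b [c [Habc [[Ha Hbc]|Habc']]]]]; last first.
    by exists a, b, c; split => //; right.
  exists a, b, c; split => //; left; split => //.
  have Hc : c \in inp by apply: (mem_subseq Hbc); rewrite in_cons mem_head orbT.
  move: Hpm; rewrite /popmin => /allP /(_ c); rewrite mem_cat Hc => /(_ isT) Hyc.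
  move: Ha; rewrite in_cons => /orP [/eqP Hay|//]. lia.
case: inp Hpm HN Hinv Hu HT => [|x rest] Hpm HN Hinv Hu HT.
  by case: HT => [a [b [c [_ [[_ H]|H]]]]].
case Hok: (okI I x).
  have HN' : N = (k.+2 * size rest + (size I).+1) + k.+1 by rewrite HN /=; lia.
  rewrite HN' iterD iter_entry //; last by rewrite Hpm.
  apply: IH; [lia|by rewrite /= addnS|exact: entry_inv|].
  case: HT => [a [b [c [Habc [[Ha Hbc]|Habc']]]]].
    move: Hbc; rewrite /= ; case: eqP => Hbx Hbc.
      exfalso; case: I Hpm HN Hinv Hu Hok Ha {HN'} => [//|y I] Hpm HN Hinv Hu Hok Ha.
      case: Hinv => [_ Hsort _ _].
      have := top_le y a I Hsort Ha. move: Hok => /= Hok. lia.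
    exists a, b, c; split => //; left; split => //; by rewrite in_cons Ha orbT.
  move: Habc'; rewrite /=; case: eqP => Hax Habc'.
    exists a, b, c; split => //; left; split => //; by rewrite Hax mem_head.
  by exists a, b, c; split => //; right.
case: I Hpm HN Hinv Hu Hok {HT} => [//|y I] Hpm HN Hinv Hu Hok.
have Hyx : y <= x by move: Hok => /= /negbT; rewrite -leqNgt.
have [z [Hzy Hz]] := small_z s x rest y I o Hinv (negbT Hpm).
have Hzo : z \notin o.
  apply/negP => Hzo.
  have := disj2 o (y :: I) (x :: rest) z z Hu Hzo; rewrite mem_cat Hz orbT eqxx. by move=> /(_ isT).
have HzI : z \notin y :: I.
  apply/negP => HzI. case: Hinv => [_ Hsort _ _]. have := top_le y z I Hsort HzI. lia.
have Hzs : 0 < z <= size s.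
  case: Hinv => [_ _ _ Hperm].
  have : z \in s by rewrite -(perm_mem Hperm) !mem_cat Hz !orbT.
  rewrite (perm_mem Hp) mem_iota. lia.
have HNk : N = (N - k) + k by rewrite HN /=; lia.
rewrite HNk iterD iter_inter //; last by rewrite Hpm.
move=> Hout.
have [t Ht] := src_inter_k k x rest (y :: I) o.
apply: (Q_final k y z x _ (size s) _ Hout Hzs Hzy).
apply: Q_iter => //.
case: Hinv => [_ Hsort _ _].
have Hi : istk (inter k x rest (y :: I) o k) = y :: I by rewrite /inter; case: eqP.
have Ho : out (inter k x rest (y :: I) o k) = o by rewrite /inter; case: eqP.
right; rewrite /R Hi Ho; split => //; first by rewrite mem_head.
by exists x, t; rewrite Ht.
Qed.

Theorem mainTheorem12 (k : nat) (s : seq nat) :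
  perm_eq s (iota 1 (size s)) ->
  (lg_sortable k s <-> avoids [:: 2; 3; 1] s).
Proof.
move=> Hp.
have Hinv : Inv s s [::] [::].
  split => //. by exists [::].
have HN : size s * k.+2 = k.+2 * size s + size ([::] : seq nat) by rewrite /= addn0 mulnC.
rewrite /lg_sortable /lg_run; split.
- move=> Hs Hc.
  have [a [b [c [Habc Hc']]]] := contains_triple s Hc.
  apply: (dirB k s Hp (size s * k.+2).+1 (size s * k.+2) s [::] [::] (ltnSn _) HN Hinv) => //.
  by exists a, b, c; split => //; right.
- move=> Hav.
  exact: (dirA k s Hp Hav (size s * k.+2).+1 (size s * k.+2) s [::] [::] (ltnSn _) HN Hinv).
Qed.
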